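(* Let $n\ge 2$ be an integer and $k$ an integer with $0\le k\le n-1$. Then $$e_k\left(\left\{\sin^2\left(\tfrac{j\pi}{2n}\right) : j=1,\dots,n-1\right\}\right) = \frac{4^{-k}(2n-k-1)!}{(2n-2k-1)!\,k!}.$$
   Context: $e_k(\alpha_1,\dots,\alpha_m)$ denotes the degree-$k$ elementary symmetric function of $\alpha_1,\dots,\alpha_m$ (with $e_0=1$). *)

(* Defs.v *)
From HB Require Import structures.
From mathcomp Require Import all_boot all_order all_algebra.
From mathcomp Require Import all_classical all_reals all_analysis.
Set Implicit Arguments. Unset Strict Implicit. Unset Printing Implicit Defensive.
Import Order.TTheory GRing.Theory Num.Theory.
Local Open Scope ring_scope.

Definition elemsym (R : comNzRingType) (m k : nat) (a : 'I_m -> R) : R :=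
  \sum_(A : {set 'I_m} | #|A| == k) \prod_(i in A) a i.

(* Main.v *)
Require Import Defs.
From HB Require Import structures.
From mathcomp Require Import all_boot all_order all_algebra.
From mathcomp Require Import all_classical all_reals all_analysis.
From mathcomp Require Import ring lra zify.
Import Order.TTheory GRing.Theory Num.Theory.
Local Open Scope ring_scope.

Module Helpers.

Section P.
Variable R : realType.

Definition cQ (m i : nat) : R := (- 4%:R) ^+ i * ('C(m.+1 + i, i.*2.+1))%:R.
Definition Q (m : nat) : {poly R} := \poly_(i < m.+1) cQ m i.

Lemma coefQ m i : (Q m)`_i = cQ m i.
Proof.
rewrite /Q coef_poly; case: ifP => // /negbT; rewrite -leqNgt => h.
by rewrite /cQ bin_small ?mulr0 //; rewrite -addnn; lia.
Qed.

Lemma binid m j : ('C(m.+3 + j.+1, j.+1.*2.+1) + 'C(m.+1 + j.+1, j.+1.*2.+1)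
   = 'C(m.+2 + j.+1, j.+1.*2.+1) * 2 + 'C(m.+2 + j, j.*2.+1))%N.
Proof.
rewrite doubleS.
have e1 : (m.+3 + j.+1 = (m + j.+2).+2)%N by lia.
have e2 : (m.+2 + j.+1 = (m + j.+2).+1)%N by lia.
have e3 : (m.+1 + j.+1 = (m + j.+2))%N by lia.
have e4 : (m.+2 + j = (m + j.+2))%N by lia.
rewrite e1 e2 e3 e4.
set N := (m + j.+2)%N.
have f1 := binS N.+1 (j.*2.+2).
have f2 := binS N (j.*2.+1).
have f3 := binS N (j.*2.+2).
lia.
Qed.

Lemma aux (x b b1 b2 b3 : R) : b + b3 = b1 * 2%:R + b2 ->
  (-4%:R) * x * b = 2%:R * ((-4%:R) * x * b1) - 4%:R * (x * b2) - (-4%:R) * x * b3.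
Proof. move=> h; have -> : b = b1 * 2%:R + b2 - b3 by rewrite -h addrK. ring. Qed.

Lemma Qrec m : Q m.+2 = (2%:P - 4%:P * 'X) * Q m.+1 - Q m.
Proof.
apply/polyP => i.
rewrite coefB mulrBl coefB coefCM -mulrA coefCM coefXM !coefQ.
case: i => [|j].
  rewrite /cQ !expr0 !mul1r !addn0 !bin1 mulr0 subr0 -[m.+3]addn1 -[m.+2]addn1 -[m.+1]addn1 !natrD; ring.
rewrite /cQ exprS; apply: aux.
by rewrite -natrM -!natrD binid.
Qed.

Lemma Q0 : Q 0 = 1.
Proof.
apply/polyP => i; rewrite coefQ coefC /cQ.
case: i => [|i] /=; first by rewrite expr0 mul1r.
by rewrite bin_small ?mulr0 // doubleS; lia.
Qed.

Lemma Q1 : Q 1 = 2%:P - 4%:P * 'X.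
Proof.
apply/polyP => i; rewrite coefQ coefB coefC coefCM coefX /cQ.
case: i => [|[|i]].
- by rewrite expr0 mul1r mulr0 subr0.
- by rewrite expr1 mulr1 sub0r mulr1.
- by rewrite bin_small ?mulr0 ?subr0 // !doubleS; lia.
Qed.

Lemma sin_rec (k : nat) (phi : R) :
  sin (k.+2%:R * phi) = 2 * cos phi * sin (k.+1%:R * phi) - sin (k%:R * phi).
Proof.
have e1 : k.+2%:R * phi = k.+1%:R * phi + phi by rewrite -[k.+2]addn1 natrD mulrDl mul1r.
have e2 : k%:R * phi = k.+1%:R * phi - phi by rewrite -[k.+1]addn1 natrD mulrDl mul1r addrK.
rewrite e1 e2 sinD sinB; ring.
Qed.

Definition PQ m phi := sin (m.+1%:R * phi) = sin phi * (Q m).[(1 - cos phi) / 2].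

Lemma sinQ2 m phi : PQ m phi /\ PQ m.+1 phi.
Proof.
rewrite /PQ; elim: m => [|m [IH1 IH2]].
  rewrite Q0 Q1 !(hornerD, hornerN, hornerM, hornerC, hornerX); split; first by rewrite mul1r mulr1.
  rewrite mulr_natl sin_mulr2n mulr2n; field; by rewrite ?pnatr_eq0.
split; first exact: IH2.
rewrite sin_rec IH1 IH2 Qrec !(hornerD, hornerN, hornerM, hornerC, hornerX); field; by rewrite ?pnatr_eq0.
Qed.

Lemma sinQ m phi : sin (m.+1%:R * phi) = sin phi * (Q m).[(1 - cos phi) / 2].
Proof. exact: (sinQ2 m phi).1. Qed.

Lemma elemsym_seq (ps : seq R) m k (a : 'I_m -> R) : size ps = m ->
  (forall i : 'I_m, ps`_i = a i) ->
  \sum_(I in {set 'I_(size ps)} | #|I| == k) \prod_(i in I) ps`_i = @elemsym R m k a.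
Proof. by move=> E; subst m => h; apply: eq_bigr => I _; apply: eq_bigr => i _; exact: h. Qed.

Lemma sin_natpi k : sin (k%:R * pi) = 0 :> R.
Proof.
elim: k => [|k IH]; first by rewrite mul0r sin0.
by rewrite -addn1 natrD mulrDl mul1r sinDpi IH oppr0.
Qed.

Definition th (m j : nat) : R := j.+1%:R * pi / (2 * m.+1)%:R.

Lemma th_bounds m j : (j < m)%N -> 0 < th m j < pi / 2.
Proof.
move=> jm; rewrite /th; have pi0 := @pi_gt0 R.
apply/andP; split.
  by rewrite divr_gt0 // ?mulr_gt0 // ltr0n.
rewrite ltr_pdivrMr ?ltr0n // natrM.
have -> : pi / 2 * (2%:R * m.+1%:R) = m.+1%:R * pi :> R by field.
by rewrite ltr_pM2r // ltr_nat; lia.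
Qed.

Lemma root_th m j : (j < m)%N -> root (Q m) (sin (th m j) ^+ 2).
Proof.
move=> jm; set t := th m j.
have hx : sin t ^+ 2 = (1 - cos (t *+ 2)) / 2.
  by rewrite cos_mulr2n cos2sin2; field.
have := sinQ m (t *+ 2); rewrite -hx.
have -> : m.+1%:R * (t *+ 2) = j.+1%:R * pi.
  rewrite /t /th natrM; field; by rewrite addrC natr1 pnatr_eq0.
rewrite (sin_natpi j.+1) => /esym /eqP; rewrite mulf_eq0 => /orP [|/eqP //].
move: (th_bounds m j jm); rewrite -/t => /andP [t0 t1].
rewrite gt_eqF // sin_gt0_pi //.
apply/andP; split; first by rewrite pmulrn_lgt0.
by rewrite mulr2n; lra.
Qed.

Lemma uniq_ps m : uniq (mkseq (fun j => sin (th m j) ^+ 2) m).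
Proof.
rewrite /mkseq map_inj_in_uniq ?iota_uniq // => j1 j2.
rewrite !mem_iota !add0n => /andP [_ h1] /andP [_ h2] /eqP.
have [a1 b1] := andP (th_bounds m j1 h1).
have [a2 b2] := andP (th_bounds m j2 h2).
have s1 : 0 <= sin (th m j1).
  apply: sin_ge0_pi; apply/andP; split; first exact: ltW. have := @pi_gt0 R; lra.
have s2 : 0 <= sin (th m j2).
  apply: sin_ge0_pi; apply/andP; split; first exact: ltW. have := @pi_gt0 R; lra.
rewrite eqrXn2 //.
move=> /eqP /sin_inj.
have hin : forall x : R, 0 < x < pi / 2 -> x \in `[- (pi / 2), pi / 2].
  move=> x /andP [x0 x1]; rewrite in_itv /=; apply/andP; split; have := @pi_gt0 R; lra.
move=> /(_ (hin _ (th_bounds m j1 h1)) (hin _ (th_bounds m j2 h2))).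
rewrite /th => /mulIf; rewrite invr_eq0 pnatr_eq0 muln_eq0 /= => /(_ isT).
move=> /mulIf; rewrite gt_eqF ?pi_gt0 // => /(_ isT) /eqP.
by rewrite eqr_nat eqSS => /eqP.
Qed.

Lemma arith k r (E : R) : cQ (k + r) ((k + r) - k) = cQ (k + r) (k + r) * ((-1) ^+ k * E) ->
  E = 4%:R ^- k * ((2 * (k + r).+1 - k - 1)`!)%:R
      / (((2 * (k + r).+1 - 2 * k - 1)`!)%:R * (k`!)%:R).
Proof.
have -> : ((k + r) - k = r)%N by lia.
have -> : (2 * (k + r).+1 - k - 1 = r.*2.+1 + k)%N by rewrite -addnn; lia.
have -> : (2 * (k + r).+1 - 2 * k - 1 = r.*2.+1)%N by rewrite -addnn; lia.
rewrite /cQ.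
have -> : ((k + r).+1 + r = r.*2.+1 + k)%N by rewrite -addnn; lia.
have -> : ((k + r).+1 + (k + r) = (k + r).*2.+1)%N by rewrite -addnn; lia.
rewrite binn mulr1.
have := bin_fact (leq_addr k r.*2.+1); rewrite addKn => hb.
rewrite -hb; set F := (r.*2.+1)`!; set G := k`!.
have F0 : (F%:R : R) != 0 by rewrite pnatr_eq0 -lt0n fact_gt0.
have G0 : (G%:R : R) != 0 by rewrite pnatr_eq0 -lt0n fact_gt0.
clearbody F G; rewrite !natrM.
have h4 : (- 4%:R) ^+ k * (-1) ^+ k = 4%:R ^+ k :> R by rewrite -exprMn mulrN1 opprK.
rewrite exprD (mulrC ((-4%:R) ^+ k)) -!mulrA (mulrA ((-4%:R) ^+ k)) h4.
move/mulfI; rewrite expf_neq0 ?oppr_eq0 ?pnatr_eq0 // => /(_ isT) ->.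
rewrite [F%:R * _]mulrA divff ?mulf_neq0 // mulr1 mulrA mulVf ?mul1r //.
Qed.
End P.
End Helpers.
Import Helpers.

Theorem mainTheorem8 (R : realType) (n k : nat) :
  (2 <= n)%N -> (k <= n.-1)%N ->
  @elemsym R n.-1 k (fun i : 'I_n.-1 =>
            sin ((i.+1)%:R * pi / (2 * n)%:R) ^+ 2 : R)
  = (4%:R ^- k) * ((2 * n - k - 1)`!)%:R
      / (((2 * n - 2 * k - 1)`!)%:R * (k`!)%:R).
Proof.
case: n => [|m] // _ /= hk.
set ps := mkseq (fun j => sin (th R m j) ^+ 2) m.
have sz : size ps = m by rewrite size_mkseq.
have szQ : size (Q R m) = (size ps).+1.
  rewrite sz /Q size_poly_eq //= /cQ.
  have -> : (m.+1 + m = m.*2.+1)%N by rewrite -addnn; lia.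
  by rewrite binn mulr1 expf_neq0 // oppr_eq0 pnatr_eq0.
have rts : all (root (Q R m)) ps.
  apply/allP => x /mapP [j]; rewrite mem_iota add0n => /andP [_ hj] ->.
  exact: root_th.
have hQ := all_roots_prod_XsubC szQ rts.
move: hQ; rewrite uniq_rootsE uniq_ps => /(_ isT) hQ.
have := congr1 (fun p : {poly R} => p`_(m - k)) hQ.
rewrite /= coefQ coefZ coef_prod_XsubC; last by rewrite sz leq_subr.
have -> : (size ps - (m - k) = k)%N by rewrite sz; lia.
rewrite (@elemsym_seq R ps m k (fun i : 'I_m => sin (th R m i) ^+ 2) sz); last first.
  by move=> i; rewrite nth_mkseq.
rewrite /Q lead_coef_poly // ?ltn0Sn //; last first.
  rewrite /cQ /=.
  have -> : (m.+1 + m = m.*2.+1)%N by rewrite -addnn; lia.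
  by rewrite binn mulr1 expf_neq0 // oppr_eq0 pnatr_eq0.
have [r hr] : exists r, m = (k + r)%N by exists (m - k)%N; lia.
clear -hr; subst m.
exact: arith.
Qed.
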